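(* Let $1\le D\le K-1$, let $\mathbf{L}$ be the $(K,D)$ AIR matrix, and let $x_0,\dots,x_{K-1}\in\mathbb{F}_q$. Define the broadcast symbols $c_k=\sum_{j=0}^{K-1}\mathbf{L}(j,k)\,x_j$ for $k\in[0:K-D-1]$. Then for every $k\in[0:K-D-1]$, $$c_k = x_k+\sum_{i=0}^{\lfloor l/2\rfloor} I_{\{k\in C_i\}}\; x_{(K-\lambda_{2i})+\big((k-(K-D-\lambda_{2i-1}))\bmod \lambda_{2i}\big)} \;+\;\sum_{i=1}^{\lceil l/2\rceil} I_{\{k\in C_i\cup C_{i+1}\cup\cdots\cup C_{\lceil l/2\rceil}\}}\sum_{j=1}^{\beta_{2i-1}} x_{\,k+\sum_{s=1}^{i-1}\beta_{2s-1}\lambda_{2s-1}+j\lambda_{2i-1}},$$ where $I_S$ equals $1$ if the statement $S$ is true and $0$ otherwise. (In particular the $i=0$ term of the first sum is $I_{\{k\in C_0\}}x_{(K-D)+(k\bmod \lambda_0)}$.)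
   Context: Notation: $[a:b]=\{a,a+1,\dots,b\}$ (empty if $b<a$). Let $K,D$ be integers with $1\le D\le K-1$. Define $\lambda_{-1}=K-D$, $\lambda_0=D$ and recursively, by Euclidean division, $\lambda_{i-1}=\beta_i\lambda_i+\lambda_{i+1}$ with $0\le\lambda_{i+1}<\lambda_i$, for $i=0,1,2,\dots$, stopping at the index $l\ge 0$ with $\lambda_{l+1}=0$ (so $\lambda_{l-1}=\beta_l\lambda_l$); $\beta_0\ge 0$ may be $0$, while $\beta_i\ge1$ for $i\ge1$. Set $\lambda_j=0$ for all $j>l$. For positive integers $m,n$ with $n\mid m$, let $\mathbf{I}_{m\times n}$ be the $m\times n$ matrix formed by stacking $m/n$ copies of the $n\times n$ identity matrix vertically, and $\mathbf{I}_{n\times m}$ its transpose ($m/n$ identity copies side by side). The $(K,D)$ AIR matrix $\mathbf{L}$ is the $K\times(K-D)$ $0/1$ matrix with rows indexed by $[0:K-1]$ and columns by $[0:K-D-1]$ whose entries are $0$ except in the following non-overlapping blocks: (a) the $(K-D)\times(K-D)$ identity matrix in rows $[0:K-D-1]$, columns $[0:K-D-1]$; (b) for each $i$ with $0\le 2i\le l$, the ''even submatrix'' $\mathbf{I}_{\lambda_{2i}\times\beta_{2i}\lambda_{2i}}$ occupying rows $[K-\lambda_{2i}:K-1]$ and columns $[K-D-\lambda_{2i-1}:K-D-\lambda_{2i+1}-1]$ (absent when $i=0$ and $\beta_0=0$); (c) for each $i$ with $1\le 2i+1\le l$, the ''odd submatrix'' $\mathbf{I}_{\beta_{2i+1}\lambda_{2i+1}\times\lambda_{2i+1}}$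 occupying rows $[K-\lambda_{2i}:K-\lambda_{2i+2}-1]$ and columns $[K-D-\lambda_{2i+1}:K-D-1]$. Column intervals: $C_i=[K-D-\lambda_{2i-1}:K-D-\lambda_{2i+1}-1]$ for $0\le i\le\lceil l/2\rceil$ (so $C_0=[0:\beta_0\lambda_0-1]$, empty if $\beta_0=0$); these partition $[0:K-D-1]$. *)

(* Defs.v *)
From HB Require Import structures.
From mathcomp Require Import all_boot all_order all_algebra.
Set Implicit Arguments. Unset Strict Implicit. Unset Printing Implicit Defensive.
Import GRing.Theory.
Local Open Scope nat_scope.

(* Euclidean remainder sequence: lampair n = (lambda_{n-1}, lambda_n). *)
Fixpoint lampair (K D n : nat) : nat * nat :=
  match n with
  | 0 => (K - D, D)
  | n'.+1 => let p := lampair K D n' in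
             (p.2, if p.2 == 0 then 0 else p.1 %% p.2)
  end.

(* lamP K D i = lambda_{i-1}  (so lamP K D 0 = K - D) *)
Definition lamP (K D i : nat) : nat := (lampair K D i).1.
(* lam K D i = lambda_i  (lambda_j = 0 for j > l) *)
Definition lam (K D i : nat) : nat := (lampair K D i).2.

Definition ell (K D : nat) : nat := find (fun i => lam K D i.+1 == 0) (iota 0 K).

Definition beta (K D i : nat) : nat := lamP K D i %/ lam K D i.

Definition inR (a b n : nat) : bool := (a <= n) && (n < b).

(* k \in C_i = [K-D-lambda_{2i-1} : K-D-lambda_{2i+1}-1] *)
Definition inC (K D i k : nat) : bool :=
  inR (K - D - lamP K D (2 * i)) (K - D - lam K D (2 * i).+1) k.

Definition airL (K D j k : nat) : bool :=
  [|| (j < K - D) && (k < K - D) && (j == k),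
      (* even submatrices I_{lambda_{2i} x beta_{2i} lambda_{2i}} *)
      [exists i : 'I_(ell K D).+1,
        [&& 2 * i <= ell K D,
            inR (K - lam K D (2 * i)) K j,
            inC K D i k &
            (k - (K - D - lamP K D (2 * i))) %% lam K D (2 * i)
              == j - (K - lam K D (2 * i))]]
    | (* odd submatrices I_{beta_{2i+1} lambda_{2i+1} x lambda_{2i+1}} *)
      [exists i : 'I_(ell K D).+1,
        [&& 1 <= (2 * i).+1 <= ell K D,
            inR (K - lam K D (2 * i)) (K - lam K D (2 * i).+2) j,
            inR (K - D - lam K D (2 * i).+1) (K - D) k &
            (j - (K - lam K D (2 * i))) %% lam K D (2 * i).+1
              == k - (K - D - lam K D (2 * i).+1)]]].

Definition airMx (R : pzSemiRingType) (K D : nat) : 'M[R]_(K, K - D) :=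
  \matrix_(j < K, k < K - D) ((airL K D j k : nat)%:R)%R.

(* Main.v *)
Require Import Defs.
From HB Require Import structures.
From mathcomp Require Import all_boot all_order all_algebra.
From mathcomp Require Import zify.
Import GRing.Theory.

Section Lam.
Variables K D : nat.
Hypothesis D1 : (1 <= D)%N.
Hypothesis DK : (D <= K - 1)%N.

Lemma lamP_S n : lamP K D n.+1 = lam K D n. Proof. by []. Qed.
Lemma lam_S n : lam K D n.+1 = if lam K D n == 0 then 0 else lamP K D n %% lam K D n.
Proof. by []. Qed.
Lemma lam0 : lam K D 0 = D. Proof. by []. Qed.
Lemma lamP0 : lamP K D 0 = K - D. Proof. by []. Qed.

Lemma lam_Sle n : lam K D n.+1 <= lam K D n.
Proof.
rewrite lam_S; case: eqP => // /eqP h; apply: ltnW; apply: ltn_pmod; lia.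
Qed.

Lemma lam_Slt n : 0 < lam K D n -> lam K D n.+1 < lam K D n.
Proof. move=> h; rewrite lam_S; case: eqP => [|_]; [lia| by apply: ltn_pmod]. Qed.

Lemma lam_mono m n : m <= n -> lam K D n <= lam K D m.
Proof.
move=> /subnK <-; elim: (n - m) => [|d IH]; first by [].
rewrite addSn; exact: leq_trans (lam_Sle _) IH.
Qed.

Lemma lam_leD n : lam K D n <= D.
Proof. by rewrite -lam0; apply: lam_mono. Qed.

Lemma lam1 : lam K D 1 <= K - D.
Proof. rewrite lam_S lam0 lamP0; case: eqP => // _; exact: leq_mod. Qed.

Lemma lam_le_KD n : lam K D n.+1 <= K - D.
Proof. have := @lam_mono 1 n.+1 (ltn0Sn n); have := lam1; lia. Qed.



Lemma lam_bound n : lam K D n <= D - n.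
Proof.
elim: n => [|n IH]; first by rewrite lam0 subn0.
have := lam_Sle n; have := @lam_Slt n; case: (posnP (lam K D n)) => h; lia.
Qed.

Lemma lamD : lam K D D = 0.
Proof. have := lam_bound D; lia. Qed.

Lemma euclid n : 0 < lam K D n -> lamP K D n = beta K D n * lam K D n + lam K D n.+1.
Proof.
move=> h; rewrite lam_S /beta; case: eqP => [|_]; first lia.
exact: divn_eq.
Qed.

Let P := fun i => lam K D i.+1 == 0.

Lemma has_ell : has P (iota 0 K).
Proof.
apply/hasP; exists D.-1; first by rewrite mem_iota; lia.
rewrite /P prednK ?lamD //.
Qed.

Lemma ell_lt : ell K D < K.
Proof. by have := has_ell; rewrite has_find size_iota. Qed.

Lemma lam_ell : lam K D (ell K D).+1 = 0.
Proof.
have := nth_find 0 has_ell; rewrite nth_iota ?ell_lt // add0n.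
by move/eqP.
Qed.

Lemma lam_pos i : i <= ell K D -> 0 < lam K D i.
Proof.
case: i => [|i] h; first by rewrite lam0.
have := before_find 0 h; rewrite nth_iota; last by have := ell_lt; lia.
rewrite /P add0n; case: posnP => // ->.
Qed.

Lemma lam_zero i : ell K D < i -> lam K D i = 0.
Proof. move=> h; have := @lam_mono (ell K D).+1 i h; rewrite lam_ell; lia. Qed.


Lemma lamP_le m n : m < n -> lamP K D n <= lam K D m.
Proof. case: n => [//|n] h; rewrite lamP_S; exact: lam_mono. Qed.

Lemma lam_le_lamP n : lam K D n.+1 <= lamP K D n.
Proof.
case: n => [|n]; first by rewrite lamP0; exact: lam1.
rewrite lamP_S; by apply: lam_mono; rewrite ltnW.
Qed.



Lemma inC_uniq i i' k : inC K D i k -> inC K D i' k -> i = i'.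
Proof.
rewrite /inC /inR.
wlog h : i i' / i < i'.
  move=> W h1 h2; case: (ltngtP i i') => h; [exact: W|symmetry; exact: W|by []].
move=> /andP[h1 h2] /andP[h3 h4].
have := @lamP_le (2 * i).+1 (2 * i') ltac:(lia). lia.
Qed.

Lemma cover k : k < K - D -> exists2 m, m <= uphalf (ell K D) & inC K D m k.
Proof.
move=> hk.
have exP : exists m, k < K - D - lam K D (2 * m).+1.
  exists (uphalf (ell K D)); rewrite lam_zero //; lia.
case: (ex_minnP exP) => m hm hmin.
exists m.
  apply: hmin; rewrite lam_zero //; lia.
rewrite /inC /inR hm andbT.
case: m hm hmin => [|m] hm hmin; first by rewrite lamP0 subnn.
have : ~~ (k < K - D - lam K D (2 * m).+1).
  by apply/negP => /hmin; lia.
have -> : 2 * m.+1 = (2 * m).+1.+1 by lia.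
rewrite lamP_S; lia.
Qed.

Lemma tele i : (0 < i -> 0 < lam K D (2 * i).-1) ->
  lam K D (2 * i) + \sum_(1 <= s < i.+1) (beta K D (2 * s).-1 * lam K D (2 * s).-1) = D.
Proof.
elim: i => [|i IH] h; first by rewrite big_geq // lam0 addn0.
have -> : \sum_(1 <= s < i.+2) (beta K D (2 * s).-1 * lam K D (2 * s).-1) =
  \sum_(1 <= s < i.+1) (beta K D (2 * s).-1 * lam K D (2 * s).-1) + beta K D (2 * i.+1).-1 * lam K D (2 * i.+1).-1.
  by rewrite big_nat_recr.
have -> : (2 * i.+1).-1 = (2 * i).+1 by lia.
have -> : 2 * i.+1 = (2 * i).+1.+1 by lia.
have hp : 0 < lam K D (2 * i).+1.
  by have := h isT; have -> : (2 * i.+1).-1 = (2 * i).+1 by lia.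
have e := euclid _ hp; rewrite lamP_S in e.
have IH' : lam K D (2 * i) + \sum_(1 <= s < i.+1) (beta K D (2 * s).-1 * lam K D (2 * s).-1) = D.
  apply: IH => hi; have := @lam_mono (2 * i).-1 (2 * i).+1 ltac:(lia); lia.
lia.
Qed.

End Lam.

Section Sums.
Variable F : nzRingType.
Variable K : nat.
Variable x : nat -> F.
Local Open Scope ring_scope.

Lemma pick_sum (P : nat -> bool) t : (t < K)%N -> (forall j, (j < K)%N -> P j = (j == t)) ->
  \sum_(j < K) (P j : nat)%:R * x j = x t.
Proof.
move=> ht hP; rewrite (bigD1 (Ordinal ht)) //= hP // eqxx mul1r big1 ?addr0 //.
move=> j hj; rewrite hP // (_ : (nat_of_ord j == t) = false) ?mul0r //.
by apply/negbTE.
Qed.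

Lemma zero_sum (P : nat -> bool) : (forall j, (j < K)%N -> P j = false) ->
  \sum_(j < K) (P j : nat)%:R * x j = 0.
Proof. by move=> hP; rewrite big1 // => j _; rewrite hP // mul0r. Qed.

Lemma block_sum a b mu r : (0 < mu)%N -> (r < mu)%N -> (a + b * mu <= K)%N ->
  \sum_(j < K) ([&& a <= j, j < a + b * mu & (j - a) %% mu == r]%N : nat)%:R * x j
  = \sum_(s < b) x (a + r + s * mu)%N.
Proof.
move=> hmu hr; elim: b => [|b IH] hb.
  rewrite big_ord0 big1 // => j _.
  by rewrite (_ : [&& _, _ & _] = false) ?mul0r //; apply/negbTE; lia.
rewrite big_ord_recr /= -IH; last by lia.
rewrite -(@pick_sum (fun j : nat => j == (a + r + b * mu)%N) (a + r + b * mu)%N) //; last by lia.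
rewrite -big_split /=; apply: eq_bigr => j _; rewrite -mulrDl -natrD; congr (_%:R * _).
have [hlt|hge] := ltnP j (a + b * mu).
  have -> : (j < a + b.+1 * mu)%N by lia.
  have -> : (nat_of_ord j == (a + r + b * mu)%N) = false by apply/negbTE; lia.
  by rewrite addn0.
rewrite andFb andbF add0n.
have -> : ((j - a) %% mu = (j - a - b * mu) %% mu)%N.
  have e : (j - a = (j - a - b * mu) + b * mu)%N by lia.
  by rewrite {1}e addnC modnMDl.
have [hlt2|hge2] := ltnP j (a + b.+1 * mu).
  rewrite modn_small; last by lia.
  have -> : (a <= j)%N by lia.
  case: eqP; case: eqP => //; lia.
have -> : (nat_of_ord j == (a + r + b * mu)%N) = false by apply/negbTE; lia.
by rewrite andbF.
Qed.

Lemma exists_sum n (P : 'I_n -> bool) : (forall i i', P i -> P i' -> i = i') ->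
  ([exists i, P i] : nat) = (\sum_i (P i : nat))%N.
Proof.
move=> hu; case: existsP => [[i0 hi0]|hn].
  rewrite (bigD1 i0) //= hi0 big1 // => i hi.
  case hPi: (P i) => //.
  by move: hi; rewrite (hu _ _ hPi hi0) eqxx.
rewrite big1 // => i _; case hPi: (P i) => //.
by case: hn; exists i.
Qed.

End Sums.

Lemma count3 (a b c : bool) : ~~ (a && b) -> ~~ (a && c) -> ~~ (b && c) ->
  ([|| a, b | c] : nat) = (a + b + c)%N.
Proof. by case: a; case: b; case: c. Qed.

Definition Ev K D k i j := [&& 2 * i <= ell K D, inR (K - lam K D (2 * i)) K j, inC K D i k &
  (k - (K - D - lamP K D (2 * i))) %% lam K D (2 * i) == j - (K - lam K D (2 * i))].
Definition Od K D k i j := [&& 1 <= (2 * i).+1 <= ell K D,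
  inR (K - lam K D (2 * i)) (K - lam K D (2 * i).+2) j,
  inR (K - D - lam K D (2 * i).+1) (K - D) k &
  (j - (K - lam K D (2 * i))) %% lam K D (2 * i).+1 == k - (K - D - lam K D (2 * i).+1)].

Section Main.
Variables K D : nat.
Hypothesis D1 : (1 <= D)%N.
Hypothesis DK : (D <= K - 1)%N.
Variable k : nat.
Hypothesis hk : k < K - D.
Let mono := @lam_mono K D D1 DK.
Let leD := @lam_leD K D D1 DK.
Let lKD := @lam_le_KD K D D1 DK.
Let lpos := @lam_pos K D D1 DK.
Let lzero := @lam_zero K D D1 DK.
Let lPle := @lamP_le K D D1 DK.
Let llP := @lam_le_lamP K D D1 DK.

Lemma airL_count j : (airL K D j k : nat) =
  ((j == k) + \sum_(i < (ell K D).+1) (Ev K D k i j : nat) + \sum_(i < (ell K D).+1) (Od K D k i j : nat))%N.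
Proof.
rewrite /airL.
have -> : (j < K - D) && (k < K - D) && (j == k) = (j == k).
  by case: eqP => [->|]; rewrite ?hk ?andbF ?andbT.
rewrite -(@exists_sum _ (fun i => Ev K D k i j)); last first.
  move=> i i' /and4P[_ _ h1 _] /and4P[_ _ h2 _]; apply: val_inj.
  exact: (@inC_uniq K D D1 DK _ _ k h1 h2).
rewrite -(@exists_sum _ (fun i => Od K D k i j)); last first.
  move=> i i' /and4P[_ h1 _ _] /and4P[_ h2 _ _]; apply: val_inj => /=.
  move: h1 h2; rewrite /inR.
  wlog h : i i' / (i < i')%N.
    move=> W h1 h2; case: (ltngtP i i') => h; [exact: W|symmetry; exact: W|by []].
  have := mono (2 * i).+2 (2 * i') ltac:(lia).
  have := leD (2 * i'); have := leD (2 * i).+2; lia.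
rewrite count3 //.
- apply/negP => /andP[/eqP -> /existsP[i /and4P[_ h _ _]]]; move: h; rewrite /inR.
  have := leD (2 * i); lia.
- apply/negP => /andP[/eqP -> /existsP[i /and4P[_ h _ _]]]; move: h; rewrite /inR.
  have := leD (2 * i); lia.
apply/negP => /andP[/existsP[i /and4P[h1 h2 h3 _]] /existsP[i' /and4P[h1' h2' h3' _]]].
move: h2 h3 h2' h3'; rewrite /inC /inR.
have := lKD (2 * i); have := leD (2 * i); have := leD (2 * i').+2.
have [hii|hii] := leqP (i : nat) i'.
  have := mono (2 * i).+1 (2 * i').+1 ltac:(lia); lia.
have := mono (2 * i').+2 (2 * i) ltac:(lia); lia.
Qed.

Variable F : nzRingType.
Variable x : nat -> F.
Local Open Scope ring_scope.

Lemma ev_part i : \sum_(j < K) (Ev K D k i j : nat)%:R * x j =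
  ((2 * i <= ell K D)%N && inC K D i k : nat)%:R *
    x (K - lam K D (2 * i) + (k - (K - D - lamP K D (2 * i))) %% lam K D (2 * i))%N.
Proof.
Local Close Scope ring_scope.
case h: ((2 * i <= ell K D) && inC K D i k); last first.
  rewrite GRing.mul0r zero_sum // => j _; apply/negbTE/and4P => -[a _ b _].
  by move: h; rewrite a b.
move/andP: h => [h1 h2]; rewrite GRing.mul1r.
have hp := lpos (2 * i) h1; have := leD (2 * i).
set c := (_ %% _); have : c < lam K D (2 * i) by apply: ltn_pmod.
move=> hc hle; apply: pick_sum; first by lia.
move=> j hj; rewrite /Ev h1 h2 /= /inR -/c.
case: eqP; case: eqP; lia.
Qed.

Local Open Scope ring_scope.
Lemma od_part i : \sum_(j < K) (Od K D k i j : nat)%:R * x j =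
  (((2 * i).+1 <= ell K D)%N && (K - D - lam K D (2 * i).+1 <= k)%N : nat)%:R *
    \sum_(s < beta K D (2 * i).+1)
       x (k + \sum_(1 <= s' < i.+1) (beta K D (2 * s').-1 * lam K D (2 * s').-1)
          + s.+1 * lam K D (2 * i).+1)%N.
Proof.
Local Close Scope ring_scope.
case h: (((2 * i).+1 <= ell K D) && (K - D - lam K D (2 * i).+1 <= k)); last first.
  rewrite GRing.mul0r zero_sum // => j _; apply/negbTE/and4P => -[a _ b _].
  by move: h b; rewrite /inR; case/andP: a => _ ->; lia.
move/andP: h => [h1 h2]; rewrite GRing.mul1r.
have hp := lpos _ h1.
have e := @euclid K D D1 DK _ hp; rewrite lamP_S in e.
have te : lam K D (2 * i) + \sum_(1 <= s' < i.+1) (beta K D (2 * s').-1 * lam K D (2 * s').-1) = D.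
  apply: (@tele K D D1 DK i) => _; have := mono (2 * i).-1 (2 * i).+1 ltac:(lia); lia.
have := leD (2 * i); have := lKD (2 * i).
set S := \sum_(1 <= s' < i.+1) _ in te *.
move=> hl1 hl2.
rewrite (eq_bigr (fun j : 'I_K => (([&& K - lam K D (2 * i) <= j,
     j < K - lam K D (2 * i) + beta K D (2 * i).+1 * lam K D (2 * i).+1 &
     (j - (K - lam K D (2 * i))) %% lam K D (2 * i).+1 == k - (K - D - lam K D (2 * i).+1)]%N : nat)%:R * x j)%R)); last first.
  move=> j _; congr ((_ : nat)%:R * _)%R; rewrite /Od h1 /inR.
  have -> : (K - D - lam K D (2 * i).+1 <= k) && (k < K - D) by apply/andP; split.
  have -> : K - lam K D (2 * i).+2 = K - lam K D (2 * i) + beta K D (2 * i).+1 * lam K D (2 * i).+1 by lia.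
  by rewrite andbT /= andbA.
rewrite block_sum //; try lia.
  apply: eq_bigr => s _; congr (x _); lia.
Qed.
End Main.

Local Open Scope ring_scope.
Theorem theorem1 (F : finFieldType) (K D : nat) (x : nat -> F) :
  (1 <= D)%N -> (D <= K - 1)%N ->
  forall k : 'I_(K - D),
    \sum_(j < K) airMx F K D j k * x j =
      x k
      + \sum_(0 <= i < (ell K D)./2.+1)
          (inC K D i k : nat)%:R *
          x ((K - lam K D (2 * i)) +
             ((k - (K - D - lamP K D (2 * i))) %% lam K D (2 * i)))%N
      + \sum_(1 <= i < (uphalf (ell K D)).+1)
          ([exists m : 'I_(uphalf (ell K D)).+1, (i <= m)%N && inC K D m k] : nat)%:R *
          \sum_(1 <= j < (beta K D (2 * i).-1).+1)
            x (k + \sum_(1 <= s < i) (beta K D (2 * s).-1 * lam K D (2 * s).-1)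
                 + j * lam K D (2 * i).-1)%N.
Proof.
move=> D1 DK k.
have hk := ltn_ord k.
rewrite /airMx; under eq_bigr => j _ do rewrite mxE.
under eq_bigr => j _ do rewrite (@airL_count K D D1 DK k hk j) !natrD !mulrDl.
rewrite big_split big_split /=.
under [X in _ + X + _]eq_bigr => j _ do rewrite natr_sum mulr_suml.
under [X in _ + X]eq_bigr => j _ do rewrite natr_sum mulr_suml.
rewrite [X in _ + X + _]exchange_big [X in _ + X]exchange_big /=.
congr (_ + _ + _).
- apply: (@pick_sum F K x (fun j => j == k)) => //.
  by have := ltn_ord k; have := @ell_lt K D D1 DK; lia.
- under eq_bigr => i _ do rewrite (@ev_part K D D1 DK k hk F x i).
  rewrite -(big_mkord xpredT (fun i => ((2 * i <= ell K D)%N && inC K D i k : nat)%:R *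
    x (K - lam K D (2 * i) + (k - (K - D - lamP K D (2 * i))) %% lam K D (2 * i))%N)).
  rewrite (@big_cat_nat _ _ _ (ell K D)./2.+1) //=; last by lia.
  rewrite [X in _ + X]big_nat_cond [X in _ + X]big1 ?addr0; last first.
    move=> i /andP[/andP[h1 h2] _].
    by rewrite (_ : (2 * i <= ell K D)%N = false) ?mul0r //; lia.
  apply: eq_big_nat => i hi.
  by rewrite (_ : (2 * i <= ell K D)%N = true) //; lia.
- under eq_bigr => i _ do rewrite (@od_part K D D1 DK k hk F x i).
  rewrite -(big_mkord xpredT (fun i => (((2 * i).+1 <= ell K D)%N && (K - D - lam K D (2 * i).+1 <= k)%N : nat)%:R *
    \sum_(s < beta K D (2 * i).+1)
       x (k + \sum_(1 <= s' < i.+1) (beta K D (2 * s').-1 * lam K D (2 * s').-1)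
          + s.+1 * lam K D (2 * i).+1)%N)).
  rewrite (@big_cat_nat _ _ _ (uphalf (ell K D))) //=; last by lia.
  rewrite [X in _ + X]big_nat_cond [X in _ + X]big1 ?addr0; last first.
    move=> i /andP[/andP[h1 h2] _].
    by rewrite (_ : ((2 * i).+1 <= ell K D)%N = false) ?mul0r //; lia.
  rewrite big_add1 /=.
  apply: eq_big_nat => i hi.
  have -> : (i + 1 * i.+1)%coq_nat = (2 * i).+1 by lia.
  rewrite [X in _ = _ * X]big_add1 big_mkord.
  congr (_ * _); congr (GRing.natmul _ (nat_of_bool _)).
  rewrite (_ : ((2 * i).+1 <= ell K D)%N = true) /=; last by lia.
  have lKD := @lam_le_KD K D D1 DK.
  apply/idP/existsP.
  + move=> h; have [m hm hc] := @cover K D D1 DK k hk.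
    have hmu : (m < (uphalf (ell K D)).+1)%N by lia.
    exists (Ordinal hmu); rewrite /= hc andbT.
    move: hc; rewrite /inC /inR => /andP[_ hc].
    case: (leqP m i) => hmi //.
    have := @lam_mono K D D1 DK (2 * m).+1 (2 * i).+1 ltac:(lia).
    have := lKD (2 * m); have := lKD (2 * i); lia.
  + move=> [m /andP[hm]]; rewrite /inC /inR => /andP[hc _].
    have := @lamP_le K D D1 DK (2 * i).+1 (2 * m) ltac:(lia).
    have := lKD (2 * i); lia.
Qed.
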